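(* Let $A$ be a real $2\times2$ matrix and $B=TAT$ where $T=\begin{bmatrix}-1&0\\0&1\end{bmatrix}$. Then $\sigma_{\mathcal{K}}(A)=\sigma_{\mathcal{K}}(B)$, $\sigma_{\mathcal{K}}^{int}(A)=\sigma_{\mathcal{K}}^{int}(B)$ and $\sigma_{\mathcal{K}}^{bd}(A)=\sigma_{\mathcal{K}}^{bd}(B)$. Moreover, $\lambda$ is a type $+$ boundary L-eigenvalue of $A$ if and only if $\lambda$ is a type $-$ boundary L-eigenvalue of $B$.
   Context: Lorentz cone $\mathcal{K}=\{(x_1,x_2)^T:|x_1|\le x_2\}$. For a real $2\times 2$ matrix $A$, a real $\lambda$ is an L-eigenvalue if there is a nonzero $x\in\mathcal{K}$ with $(A-\lambda I)x\in\mathcal{K}$ and $x^T(A-\lambda I)x=0$; $\sigma_{\mathcal{K}}(A)$ is the set of L-eigenvalues; $\sigma^{int}_{\mathcal{K}}(A)$ (resp. $\sigma^{bd}_{\mathcal{K}}(A)$) is the set of those having an associated such $x$ in the interior (resp. on the boundary) of $\mathcal{K}$. For $A=\begin{bmatrix}a&b\\c&d\end{bmatrix}$, $\lambda$ is a type $+$ boundary L-eigenvalue if $\lambda=\frac{a+d+b+c}{2}$ and $a-d\le c-b$, and a type $-$ boundary L-eigenvalue if $\lambda=\frac{a+d-b-c}{2}$ and $a-d\le b-c$. *)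

(* Defs.v *)
From mathcomp Require Import all_boot all_order all_algebra.
From mathcomp Require Import reals.
Set Implicit Arguments. Unset Strict Implicit. Unset Printing Implicit Defensive.
Import Order.TTheory GRing.Theory Num.Theory.
Local Open Scope ring_scope.

Definition x1 {R : realType} (x : 'cV[R]_2) : R := x ord0 ord0.
Definition x2 {R : realType} (x : 'cV[R]_2) : R := x (lift ord0 ord0) ord0.

Definition inK {R : realType} (x : 'cV[R]_2) : Prop := `|x1 x| <= x2 x.
Definition inK_int {R : realType} (x : 'cV[R]_2) : Prop := `|x1 x| < x2 x.
Definition inK_bd {R : realType} (x : 'cV[R]_2) : Prop := `|x1 x| = x2 x.

Definition L_eigpair {R : realType} (A : 'M[R]_2) (lam : R) (x : 'cV[R]_2) : Prop :=
  x != 0 /\ inK x /\ inK ((A - lam%:M) *m x) /\ (x^T *m (A - lam%:M) *m x) ord0 ord0 = 0.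

Definition sigmaK {R : realType} (A : 'M[R]_2) (lam : R) : Prop :=
  exists x, L_eigpair A lam x.
Definition sigmaK_int {R : realType} (A : 'M[R]_2) (lam : R) : Prop :=
  exists x, L_eigpair A lam x /\ inK_int x.
Definition sigmaK_bd {R : realType} (A : 'M[R]_2) (lam : R) : Prop :=
  exists x, L_eigpair A lam x /\ inK_bd x.

Definition i0 : 'I_2 := ord0.
Definition i1 : 'I_2 := lift ord0 ord0.

Definition bd_plus {R : realType} (A : 'M[R]_2) (lam : R) : Prop :=
  let a := A i0 i0 in let b := A i0 i1 in let c := A i1 i0 in let d := A i1 i1 in
  lam = (a + d + b + c) / 2 /\ a - d <= c - b.
Definition bd_minus {R : realType} (A : 'M[R]_2) (lam : R) : Prop :=
  let a := A i0 i0 in let b := A i0 i1 in let c := A i1 i0 in let d := A i1 i1 in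
  lam = (a + d - b - c) / 2 /\ a - d <= b - c.

Definition Tmx {R : realType} : 'M[R]_2 := \matrix_(i, j) (if i == j then (if i == i0 then -1 else 1) else 0).

(* Main.v *)
Require Import Defs.
From mathcomp Require Import all_boot all_order all_algebra.
From mathcomp Require Import reals.
From mathcomp Require Import ring lra.
Import Order.TTheory GRing.Theory Num.Theory.
Local Open Scope ring_scope.

Section S.
Variable R : realType.

Lemma Tmx_entries (i j : 'I_2) : (Tmx : 'M[R]_2) i j =
  if i == j then (if i == i0 then -1 else 1) else 0.
Proof. by rewrite /Tmx mxE. Qed.

Lemma TT : (Tmx : 'M[R]_2) *m Tmx = 1%:M.
Proof.
apply/matrixP=> i j; rewrite !mxE !big_ord_recr big_ord0 /= !Tmx_entries.
case: i => [[|[|i]] Hi] //; case: j => [[|[|j]] Hj] //=; rewrite ?mxE /=.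
all: rewrite /i0 /=; try by [].
all: by rewrite ?mulr0 ?mul0r ?add0r ?addr0 ?mulrNN ?mulr1.
Qed.

Lemma TtrT : (Tmx : 'M[R]_2)^T = Tmx.
Proof.
apply/matrixP=> i j; rewrite !mxE /=.
case: i => [[|[|i]] Hi] //; case: j => [[|[|j]] Hj] //=.
Qed.

Lemma x1T (x : 'cV[R]_2) : x1 (Tmx *m x) = - x1 x.
Proof.
rewrite /x1 !mxE !big_ord_recr big_ord0 /= !Tmx_entries /=.
rewrite add0r mul0r addr0 mulN1r; by congr (- x _ _); apply/val_inj.
Qed.

Lemma x2T (x : 'cV[R]_2) : x2 (Tmx *m x) = x2 x.
Proof.
rewrite /x2 !mxE !big_ord_recr big_ord0 /= !Tmx_entries /=.
rewrite add0r mul0r add0r mul1r; by congr (x _ _); apply/val_inj.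
Qed.

Lemma inKT x : inK (Tmx *m x) <-> @inK R x.
Proof. by rewrite /inK x1T x2T normrN. Qed.
Lemma inK_intT x : inK_int (Tmx *m x) <-> @inK_int R x.
Proof. by rewrite /inK_int x1T x2T normrN. Qed.
Lemma inK_bdT x : inK_bd (Tmx *m x) <-> @inK_bd R x.
Proof. by rewrite /inK_bd x1T x2T normrN. Qed.

Lemma TTx (x : 'cV[R]_2) : Tmx *m (Tmx *m x) = x.
Proof. by rewrite mulmxA TT mul1mx. Qed.

Lemma TAT_sub (A : 'M[R]_2) lam :
  Tmx *m A *m Tmx - lam%:M = Tmx *m (A - lam%:M) *m Tmx.
Proof.
by rewrite mulmxBr mulmxBl mul_mx_scalar -scalemxAl TT scalemx1.
Qed.

Lemma eigT (A : 'M[R]_2) lam x :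
  L_eigpair A lam x -> L_eigpair (Tmx *m A *m Tmx) lam (Tmx *m x).
Proof.
move=> [nz [k1 [k2 q]]]; split; [|split; [|split]].
- apply: contra nz => /eqP H; apply/eqP.
  by rewrite -(TTx x) H mulmx0.
- by apply/inKT.
- by rewrite TAT_sub -mulmxA TTx -mulmxA; apply/inKT.
- rewrite TAT_sub trmx_mul TtrT -!mulmxA TTx !mulmxA.
  by rewrite -(mulmxA _ Tmx Tmx) TT mulmx1.
Qed.

Lemma TTA (A : 'M[R]_2) : Tmx *m (Tmx *m A *m Tmx) *m Tmx = A.
Proof. by rewrite !mulmxA TT mul1mx -mulmxA TT mulmx1. Qed.

Lemma TATE (A : 'M[R]_2) : let B := Tmx *m A *m Tmx in
  B i0 i0 = A i0 i0 /\ B i0 i1 = - A i0 i1 /\ B i1 i0 = - A i1 i0 /\ B i1 i1 = A i1 i1.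
Proof.
rewrite /= !mxE !big_ord_recl !big_ord0 !mxE !big_ord_recl !big_ord0 !Tmx_entries /=.
rewrite /i0 /i1 /=; split; [|split; [|split]]; ring.
Qed.
End S.

Theorem corollary3p6 (R : realType) (A : 'M[R]_2) :
  let B := Tmx *m A *m Tmx in
  (forall lam : R, sigmaK A lam <-> sigmaK B lam) /\
  (forall lam : R, sigmaK_int A lam <-> sigmaK_int B lam) /\
  (forall lam : R, sigmaK_bd A lam <-> sigmaK_bd B lam) /\
  (forall lam : R, bd_plus A lam <-> bd_minus B lam).
Proof.
move=> B; split; [|split; [|split]] => lam; split.
- by move=> [x H]; exists (Tmx *m x); apply: eigT.
- by move=> [x H]; exists (Tmx *m x); rewrite -(@TTA R A); apply: eigT.
- by move=> [x [H K]]; exists (Tmx *m x); split; [apply: eigT|apply/inK_intT].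
- by move=> [x [H K]]; exists (Tmx *m x); split;
    [rewrite -(@TTA R A); apply: eigT|apply/inK_intT].
- by move=> [x [H K]]; exists (Tmx *m x); split; [apply: eigT|apply/inK_bdT].
- by move=> [x [H K]]; exists (Tmx *m x); split;
    [rewrite -(@TTA R A); apply: eigT|apply/inK_bdT].
- rewrite /bd_plus /bd_minus; have [e1 [e2 [e3 e4]]] := @TATE R A.
  rewrite /B e1 e2 e3 e4 => [[-> h]]; split; lra.
- rewrite /bd_plus /bd_minus; have [e1 [e2 [e3 e4]]] := @TATE R A.
  rewrite /B e1 e2 e3 e4 => [[-> h]]; split; lra.
Qed.
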